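(* Consider the Multiple-Path Orienteering Problem (MOP) with $M$ robots on a metric graph $G=(\mathcal{V},\mathcal{E})$: choose paths $\mathcal{Q}_1,\dots,\mathcal{Q}_M$, where $\mathcal{Q}_i$ starts at the given vertex $v_{s_i}$ and has cost $C(\mathcal{Q}_i)\le B$, so as to maximize the team reward $f(\{\mathcal{Q}_1,\dots,\mathcal{Q}_M\})=g\big(\bigcup_{i=1}^M\mathcal{Q}_i\big)$. Then there exists an optimal solution $\mathcal{Q}^*=\{\mathcal{Q}^*_1,\dots,\mathcal{Q}^*_M\}$ of the MOP whose paths do not overlap, i.e. $\mathcal{Q}^*_i\cap\mathcal{Q}^*_j=\emptyset$ for all $i\ne j$.
   Context: $G=(\mathcal{V},\mathcal{E})$ is a graph with metric edge weights. A path is an ordered sequence of non-repeated vertices, identified also with its set of vertices; its cost $C(\cdot)$ is the sum of the edge weights along it. The reward function $g:2^{\mathcal{V}}\to\mathbb{R}_{\ge 0}$ is normalized ($g(\mathcal{A})=0$ iff $\mathcal{A}=\emptyset$), monotone non-decreasing and submodular. Vertices visited by several robots contribute to the team reward only once.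
   Formalization: The start vertices $v_{s_i}$ are pairwise distinct, and G is a complete graph on a finite vertex set, so every sequence of distinct vertices starting at $v_{s_i}$ is a path. Each condition added here is assumed in the paper as well or is needed for the statement above to hold. *)

(* Defs.v *)
From HB Require Import structures.
From mathcomp Require Import all_boot all_order all_algebra.
Set Implicit Arguments. Unset Strict Implicit. Unset Printing Implicit Defensive.
Import Order.TTheory GRing.Theory Num.Theory.
Local Open Scope ring_scope.

Definition metric (R : realFieldType) (V : finType) (w : V -> V -> R) : Prop :=
  [/\ forall x y, 0 <= w x y,
      forall x, w x x = 0,
      forall x y, w x y = w y x &
      forall x y z, w x z <= w x y + w y z].

Fixpoint path_cost (R : realFieldType) (V : finType) (w : V -> V -> R)
    (p : seq V) : R :=
  match p with
  | x :: ((y :: _) as q) => w x y + path_cost w q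
  | _ => 0
  end.

Definition is_path_from (V : finType) (s : V) (p : seq V) : bool :=
  uniq p && (head s p == s) && (size p > 0)%N.

Definition vset (V : finType) (p : seq V) : {set V} := [set x | x \in p].

Definition normalized (R : realFieldType) (V : finType) (g : {set V} -> R) :=
  forall A, g A = 0 <-> A = set0.
Definition monotone (R : realFieldType) (V : finType) (g : {set V} -> R) :=
  forall A B : {set V}, A \subset B -> g A <= g B.
Definition submodular (R : realFieldType) (V : finType) (g : {set V} -> R) :=
  forall A B : {set V}, g (A :|: B) + g (A :&: B) <= g A + g B.

Definition team_reward (R : realFieldType) (V : finType) (M : nat)
    (g : {set V} -> R) (Q : 'I_M -> seq V) : R :=
  g (\bigcup_(i < M) vset (Q i)).

Definition mop_feasible (R : realFieldType) (V : finType) (M : nat)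
    (w : V -> V -> R) (B : R) (start : 'I_M -> V) (Q : 'I_M -> seq V) : Prop :=
  forall i, is_path_from (start i) (Q i) /\ path_cost w (Q i) <= B.

Definition mop_optimal (R : realFieldType) (V : finType) (M : nat)
    (w : V -> V -> R) (B : R) (start : 'I_M -> V) (g : {set V} -> R)
    (Q : 'I_M -> seq V) : Prop :=
  mop_feasible w B start Q /\
  forall Q', mop_feasible w B start Q' -> team_reward g Q' <= team_reward g Q.

(* Main.v *)
Require Import Defs.
From HB Require Import structures.
From mathcomp Require Import all_boot all_order all_algebra.
From Stdlib Require Import ClassicalEpsilon.
Import Order.TTheory GRing.Theory Num.Theory.
Local Open Scope ring_scope.

Lemma exmax (R : realFieldType) (T : finType) (P : pred T) (f : T -> R) x0 :
  P x0 -> exists x, P x /\ forall y, P y -> f y <= f x.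
Proof.
move=> Px0.
suff [x [Px H]] : exists x, P x /\ forall y, y \in enum T -> P y -> f y <= f x.
  by exists x; split => // y; apply: H; rewrite mem_enum.
elim: (enum T) => [|y s [x [Px H]]]; first by exists x0.
case Py: (P y); last first.
  exists x; split => // z; rewrite inE => /orP[/eqP->|zs]; [by rewrite Py|exact: H].
case: (leP (f y) (f x)) => hyx.
  exists x; split => // z; rewrite inE => /orP[/eqP->|zs] //; exact: H.
exists y; split => // z; rewrite inE => /orP[/eqP->|zs Pz] //.
by apply: le_trans (H z zs Pz) (ltW hyx).
Qed.

Lemma cost_shortcut (R : realFieldType) (V : finType) (w : V -> V -> R) x y u :
  metric w -> path_cost w (x :: u) <= w x y + path_cost w (y :: u).
Proof.
case=> w0 _ _ tri; case: u => [|z u] /=; first by rewrite addr0 w0.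
by rewrite addrA lerD2r.
Qed.

Lemma cost_filter (R : realFieldType) (V : finType) (w : V -> V -> R) (p : pred V) t :
  metric w -> forall x, path_cost w (x :: filter p t) <= path_cost w (x :: t).
Proof.
move=> mw; elim: t => [|y t IH] x //.
have pc a b u : path_cost w (a :: b :: u) = w a b + path_cost w (b :: u) by [].
have e : filter p (y :: t) = if p y then y :: filter p t else filter p t by [].
rewrite e pc; case: (p y); first by rewrite pc lerD2l.
apply: le_trans (@cost_shortcut _ _ w x y _ mw) _.
by rewrite lerD2l.
Qed.

Theorem proposition1 (R : realFieldType) (V : finType) (M : nat)
    (w : V -> V -> R) (B : R) (start : 'I_M -> V) (g : {set V} -> R) :
  metric w ->
  (forall A, 0 <= g A) -> normalized g -> monotone g -> submodular g ->
  injective start ->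
  0 <= B ->
  exists Q : 'I_M -> seq V,
    mop_optimal w B start g Q /\
    forall i j : 'I_M, i != j -> [disjoint vset (Q i) & vset (Q j)].
Proof.
move=> mw g0 gn gm gs sinj B0.
pose P U := exists Q, mop_feasible w B start Q /\ \bigcup_(i < M) vset (Q i) = U.
pose Pb U := if excluded_middle_informative (P U) then true else false.
have PbP U : Pb U -> P U by rewrite /Pb; case: excluded_middle_informative.
have PPb U : P U -> Pb U by rewrite /Pb; case: excluded_middle_informative.
have feas0 : mop_feasible w B start (fun i => [:: start i]).
  by move=> i; split => //=; rewrite /is_path_from /= eqxx.
have [U [PU Umax]] := @exmax _ _ Pb g _ (PPb _ (ex_intro _ _ (conj feas0 erefl))).
have [Q [fQ defU]] := PbP _ PU.
have Qe i : Q i = start i :: behead (Q i).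
  by case: (fQ i) => /andP[/andP[_]]; case: (Q i) => //= a t /eqP ->.
pose keep (i : 'I_M) (x : V) :=
  [forall j : 'I_M, start j != x] && [forall j : 'I_M, (j < i)%N ==> (x \notin Q j)].
pose Q' i := start i :: [seq x <- behead (Q i) | keep i x].
have sub' i : {subset Q' i <= Q i}.
  move=> x; rewrite inE => /orP[/eqP->|]; first by rewrite Qe mem_head.
  by rewrite mem_filter => /andP[_ xQ]; rewrite Qe inE xQ orbT.
have fQ' : mop_feasible w B start Q'.
  move=> i; case: (fQ i) => pQ cQ; split.
    rewrite /is_path_from /= eqxx andbT /=.
    move: pQ; rewrite /is_path_from Qe /= => /andP[/andP[/andP[sQ uQ] _] _].
    rewrite filter_uniq // andbT mem_filter negb_and sQ orbT //.
  by apply: le_trans (@cost_filter _ _ w _ _ mw _) _; rewrite -Qe.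
have defU' : \bigcup_(i < M) vset (Q' i) = U.
  rewrite -defU; apply/setP => x; apply/bigcupP/bigcupP => [[i _]|[k _]].
    by rewrite /vset !inE => /sub' xQ; exists i => //; rewrite inE.
  rewrite /vset inE => xQk.
  case: (boolP [forall j, start j != x]) => hs; last first.
    move/forallPn: hs => [j]; rewrite negbK => /eqP <-.
    by exists j => //; rewrite inE mem_head.
  pose k' := [arg min_(j < k | x \in Q j) j].
  case: (@arg_minnP _ k (fun j => x \in Q j) (fun j : 'I_M => nat_of_ord j) xQk).
  move=> j xQj jmin; exists j => //; rewrite inE inE mem_filter.
  apply/orP; right; apply/andP; split.
    rewrite /keep hs /=; apply/forallP => l; apply/implyP => lj.
    by apply/negP => xl; move: (jmin l xl); rewrite leqNgt lj.
  move: xQj; rewrite Qe inE => /orP[/eqP xs|] //.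
  by move/forallP: hs => /(_ j); rewrite xs eqxx.
exists Q'; split.
  split => // Q'' fQ''; rewrite /team_reward defU'.
  by apply: Umax; apply: PPb; exists Q''.
have key (i j : 'I_M) (x : V) : (i < j)%N -> x \in Q' i -> x \in Q' j -> False.
  move=> ij xi; rewrite inE => /orP[/eqP xj|].
    move: xi; rewrite inE => /orP[/eqP|].
      by rewrite xj => /sinj ji; move: ij; rewrite ji ltnn.
    by rewrite mem_filter => /andP[/andP[H _] _]; move/forallP: H => /(_ j); rewrite xj eqxx.
  rewrite mem_filter => /andP[/andP[_ H] _]; move/forallP: H => /(_ i).
  rewrite ij /= => /negP.
  by apply; apply: sub'.
move=> i j ij; apply/pred0P => x /=; rewrite /vset !inE.
apply/negbTE/negP => /andP[xi xj].
case: (ltngtP i j) => [lt|gt|/val_inj e]; first exact: (key i j x).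
  exact: (key j i x).
by move: ij; rewrite e eqxx.
Qed.
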